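(* Let $m\geq 1$ and let $\Lambda_m\subseteq\mathbb{R}^{2^m}$ be the Barnes–Wall lattice defined below, whose minimum is $2^{m-1}$. If $x\in\Lambda_m$ satisfies $(x,x)>2^{m-1}$, then $(x,x)\geq 2^{m-1}+2^{m-2}$.
   Context: Let $\mathcal{V}_m=\mathbb{F}_2^m$ and let $(e_v\mid v\in\mathcal{V}_m)$ be an orthonormal basis of Euclidean space $(\mathbb{R}^{2^m},(\cdot,\cdot))$ indexed by $\mathcal{V}_m$. For $\mathcal{U}\subseteq\mathcal{V}_m$ put $x_{\mathcal{U}}=\sum_{v\in\mathcal{U}}e_v$. Define $\Lambda_m=\langle 2^{\lfloor (m-r)/2\rfloor}x_{\mathcal{U}} \mid 0\le r\le m,\ \mathcal{U}\text{ an affine subspace of }\mathcal{V}_m\text{ of dimension }r\rangle_{\mathbb{Z}}$. The minimum (smallest value of $(x,x)$ for nonzero $x\in\Lambda_m$) equals $2^{m-1}$. *)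

(* Defs.v *)
From HB Require Import structures.
From mathcomp Require Import all_boot all_order all_algebra.
Set Implicit Arguments. Unset Strict Implicit. Unset Printing Implicit Defensive.
Import Order.TTheory GRing.Theory Num.Theory.
Local Open Scope ring_scope.

Notation Vm m := ('rV['F_2]_m).

Definition affine_sub (m : nat) (a : Vm m) (W : {vspace Vm m}) : {set Vm m} :=
  [set v : Vm m | v - a \in W].

(* Vectors of R^{2^m}, coordinates indexed by V_m (orthonormal basis e_v). *)
Notation vecR R m := {ffun Vm m -> R}.

Definition xU (R : realFieldType) (m : nat) (U : {set Vm m}) : vecR R m :=
  [ffun v => (v \in U)%:R].

Definition dotR (R : realFieldType) (m : nat) (x y : vecR R m) : R :=
  \sum_(v : Vm m) x v * y v.

Definition BW_gen (R : realFieldType) (m : nat) (x : vecR R m) : Prop :=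
  exists (r : nat) (a : Vm m) (W : {vspace Vm m}),
    [/\ (r <= m)%N, \dim W = r &
        x = [ffun v => 2 ^+ ((m - r)./2) * xU R (@affine_sub m a W) v]].

(* Lambda_m : the Z-span (additive subgroup generated) of the generators. *)
Inductive BW (R : realFieldType) (m : nat) : vecR R m -> Prop :=
  | BW_g (x : vecR R m) : BW_gen x -> BW x
  | BW_0 : BW (0 : vecR R m)
  | BW_sub (x y : vecR R m) : BW x -> BW y -> BW (x - y).

(* Main.v *)
Require Import Defs.
From HB Require Import structures.
From mathcomp Require Import all_boot all_order all_algebra.
From mathcomp Require Import ring lra zify.
From Stdlib Require Import Classical.
Import Order.TTheory GRing.Theory Num.Theory.
Local Open Scope ring_scope.

Set Implicit Arguments. Unset Strict Implicit. Unset Printing Implicit Defensive.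

Section Geo.
Variable m : nat.
Local Notation V := 'rV['F_2]_m.

Lemma f2_cases (k : 'F_2) : k = 0 \/ k = 1.
Proof. case: k => [[|[|n]] Hk] //=; [left|right]; exact/val_inj. Qed.

Lemma addvv (x : V) : x + x = 0.
Proof. apply/rowP => i; rewrite !mxE. case: (x 0 i) => [[|[|n]] Hk] //=; exact/val_inj. Qed.

Lemma oppv (x : V) : - x = x.
Proof. by rewrite -[LHS]addr0 -(addvv x) addrA addNr add0r. Qed.

Lemma subvE (x y : V) : x - y = x + y.
Proof. by rewrite oppv. Qed.

Lemma addvK (x y : V) : x + y + y = x.
Proof. by rewrite -addrA addvv addr0. Qed.

Lemma memv_addl (Y : {vspace V}) z v : (v \in Y + <[z]>)%VS = (v \in Y) || (v + z \in Y).
Proof.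
apply/idP/idP.
  case/memv_addP => y Hy [w /vlineP [k ->] ->].
  case: (f2_cases k) => ->; rewrite ?scale0r ?scale1r ?addr0 ?Hy //.
  by rewrite addvK Hy orbT.
case/orP => H.
  by rewrite -[v]addr0; apply: memv_add => //; exact: mem0v.
by rewrite -(addvK v z); apply: memv_add => //; exact: memv_line.
Qed.

Lemma dim_addl (Y : {vspace V}) z : z \notin Y -> \dim (Y + <[z]>) = (\dim Y).+1.
Proof.
move=> zY; rewrite dimv_disjoint_sum; last first.
  apply/eqP; rewrite -subv0; apply/subvP => v; rewrite memv_cap memv0 => /andP[vY /vlineP[k kz]].
  rewrite kz in vY *; move: vY.
  case: (f2_cases k) => ->; rewrite ?scale0r ?eqxx //.
  by rewrite scale1r (negbTE zY).
rewrite (dim_vline (z : V)); case: (z =P 0) => [z0|]; last by rewrite addn1.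
by rewrite z0 mem0v in zY.
Qed.

Lemma subv_in (U W : {vspace V}) x : (U <= W)%VS -> x \in U -> x \in W.
Proof. by move/subvP; apply. Qed.

Definition hyper (W W' : {vspace V}) c :=
  [/\ (W' <= W)%VS, (\dim W').+1 = \dim W, c \in W & c \notin W'].

Lemma hyper_eq W W' c : hyper W W' c -> (W' + <[c]> = W)%VS.
Proof.
case=> sW dW cW cW'; apply/eqP; rewrite eqEdim subv_add sW -memvE cW /=.
by rewrite dim_addl // dW.
Qed.

Lemma hyper_add W W' c w : hyper W W' c -> w \in W -> w \notin W' -> w + c \in W'.
Proof.
move=> H; rewrite -{1}(hyper_eq H) memv_addl => /orP[->//|->//].
Qed.

Lemma hyper_exists (W : {vspace V}) k : \dim W = k.+1 ->
  exists W' c, hyper W W' c.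
Proof.
move=> dW.
have bW := vbasisP W.
have fW := basis_free bW.
have sW := span_basis bW.
have sz : size (vbasis W) = k.+1 by rewrite size_tuple dW.
move: fW sW sz; case: (tval (vbasis W)) => [|x X] //=.
rewrite free_cons => /andP[xX fX] sW [sX].
exists <<X>>%VS, x; split.
- by rewrite -sW span_cons addvSr.
- move: fX; rewrite /free => /eqP ->. by rewrite dW sX.
- by rewrite -sW; apply: memv_span; rewrite inE eqxx.
- exact: xX.
Qed.

Lemma exists_out (W W' : {vspace V}) : (\dim W' < \dim W)%N -> exists c, (c \in W) && (c \notin W').
Proof.
move=> lt; case: (pickP [pred c | (c \in W) && (c \notin W')]) => [c Hc|H]; first by exists c.
have : (W <= W')%VS.
  apply/subvP => v vW; move: (H v) => /=; rewrite vW /=; by move/negbFE.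
by move/dimvS; rewrite leqNgt lt.
Qed.

End Geo.

Section Lat.
Variable R : realFieldType.
Variable m : nat.
Local Notation V := 'rV['F_2]_m.
Local Notation vec := {ffun V -> R}.

Definition gen (e : nat) (U : {set V}) : vec := [ffun v => 2 ^+ e * (v \in U)%:R].

Inductive span (ex : nat -> nat) (a : V) (W : {vspace V}) : vec -> Prop :=
| Sg b Y j : (Y <= W)%VS -> b - a \in W ->
    span ex a W (gen (ex (\dim W - \dim Y) + j)%N (affine_sub b Y))
| S0 : span ex a W 0
| Sb x y : span ex a W x -> span ex a W y -> span ex a W (x - y).

Lemma span_opp ex a W x : span ex a W x -> span ex a W (- x).
Proof. by move=> H; rewrite -sub0r; apply: Sb => //; apply: S0. Qed.

Lemma span_add ex a W x y : span ex a W x -> span ex a W y -> span ex a W (x + y).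
Proof. by move=> Hx Hy; rewrite -[y]opprK; apply: Sb => //; apply: span_opp. Qed.

Lemma vecP (x y : vec) : (forall v, x v = y v) -> x = y.
Proof. by move=> H; apply/ffunP. Qed.

Lemma vsubE (x y : vec) v : (x - y) v = x v - y v.
Proof. by rewrite !ffunE. Qed.
Lemma vaddE (x y : vec) v : (x + y) v = x v + y v.
Proof. by rewrite !ffunE. Qed.
Lemma voppE (x : vec) v : (- x) v = - x v.
Proof. by rewrite !ffunE. Qed.
Lemma v0E v : (0 : vec) v = 0.
Proof. by rewrite !ffunE. Qed.

Lemma affE (a : V) (W : {vspace V}) (v : V) : (v \in affine_sub a W) = (v - a \in W).
Proof. by rewrite inE. Qed.

Lemma span_supp ex a W x : span ex a W x -> forall v, v - a \notin W -> x v = 0.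
Proof.
elim=> [b Y j sY bA|| x1 y1 _ H1 _ H2] v vA; last 2 first.
- by rewrite v0E.
- by rewrite vsubE H1 // H2 // subrr.
rewrite ffunE inE; case H: (v - b \in Y); rewrite ?mulr0 //.
have : v - a \in W.
  have -> : v - a = (v - b) + (b - a) by rewrite addrA addrNK.
  by apply: rpredD bA; move/subvP: sY; apply; rewrite H.
by rewrite (negbTE vA).
Qed.

Definition isZ (r : R) := exists z : int, r = z%:~R.

Lemma span_int ex a W x : span ex a W x -> forall v, isZ (x v).
Proof.
elim=> [b Y j sY bA|| x1 y1 _ H1 _ H2] v.
- rewrite ffunE; exists (2 ^ (ex (\dim W - \dim Y) + j) * (v \in affine_sub b Y))%N.
  by rewrite -pmulrn natrM natrX.
- by exists 0; rewrite v0E.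
- rewrite vsubE; case: (H1 v) => z1 ->; case: (H2 v) => z2 ->; exists (z1 - z2); by rewrite intrB.
Qed.

Definition res (B : {set V}) (x : vec) : vec := [ffun v => if v \in B then x v else 0].
Definition tr (c : V) (x : vec) : vec := [ffun v => x (v + c)].

Local Notation dot := (@dotR R m).
Definition nrm (x : vec) := dot x x.

Lemma dotC x y : dot x y = dot y x.
Proof. by apply: eq_bigr => v _; rewrite mulrC. Qed.
Lemma dotBl x y z : dot (x - y) z = dot x z - dot y z.
Proof. rewrite /dotR -sumrB; apply: eq_bigr => v _; by rewrite vsubE mulrBl. Qed.
Lemma dotDl x y z : dot (x + y) z = dot x z + dot y z.
Proof. rewrite /dotR -big_split; apply: eq_bigr => v _; by rewrite vaddE mulrDl. Qed.
Lemma dotNl x z : dot (- x) z = - dot x z.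
Proof. rewrite /dotR -sumrN; apply: eq_bigr => v _; by rewrite voppE mulNr. Qed.
Lemma dotBr x y z : dot z (x - y) = dot z x - dot z y.
Proof. by rewrite dotC dotBl !(dotC z). Qed.
Lemma dotDr x y z : dot z (x + y) = dot z x + dot z y.
Proof. by rewrite dotC dotDl !(dotC z). Qed.
Lemma dotNr x z : dot z (- x) = - dot z x.
Proof. by rewrite dotC dotNl dotC. Qed.

Lemma nrm_ge0 x : 0 <= nrm x.
Proof. apply: sumr_ge0 => v _; exact: mulr_ge0_le0 || exact: (sqr_ge0 (x v)) || by rewrite -expr2 sqr_ge0. Qed.

Lemma nrm_eq0 x : nrm x = 0 -> x = 0.
Proof.
move=> H; apply/vecP => v; rewrite v0E.
have /psumr_eq0P H2 : forall i : V, true -> 0 <= x i * x i by move=> i _; rewrite -expr2 sqr_ge0.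
have := H2 H v isT; by move/eqP; rewrite mulf_eq0 orbb => /eqP.
Qed.

Lemma nrm_gt0 x : x != 0 -> 0 < nrm x.
Proof. move=> nz; rewrite lt0r nrm_ge0 andbT; apply/eqP => /nrm_eq0 H; by rewrite H eqxx in nz. Qed.

Lemma nrmB x y : nrm (x - y) = nrm x + nrm y - 2 * dot x y.
Proof. rewrite /nrm !dotBl !dotBr (dotC y x); ring. Qed.
Lemma nrmD x y : nrm (x + y) = nrm x + nrm y + 2 * dot x y.
Proof. rewrite /nrm !dotDl !dotDr (dotC y x); ring. Qed.
Lemma nrmN x : nrm (- x) = nrm x.
Proof. by rewrite /nrm dotNl dotNr opprK. Qed.

Lemma sum_tr (g : V -> R) c : \sum_v g v = \sum_v g (v + c).
Proof. by rewrite (reindex_inj (addIr c)). Qed.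

End Lat.

Section Split.
Variable R : realFieldType.
Variable m : nat.
Local Notation V := 'rV['F_2]_m.
Local Notation vec := {ffun V -> R}.
Local Notation gen := (@gen R m).
Local Notation res := (@res R m).
Local Notation tr := (@tr R m).
Local Notation span := (@span R m).

Lemma if_ind (P Q : bool) (t : R) : (if P then t * Q%:R else 0) = t * (P && Q)%:R.
Proof. by case: P; case: Q; rewrite ?mulr0. Qed.

Lemma res_gen (B : {set V}) e U : res B (gen e U) = gen e (B :&: U).
Proof. apply/vecP => v; by rewrite !ffunE in_setI if_ind. Qed.

Lemma gen_set0 e : gen e set0 = 0.
Proof. apply/vecP => v; by rewrite !ffunE inE mulr0. Qed.

Lemma tr_gen c e (q : V) Y : tr c (gen e (affine_sub q Y)) = gen e (affine_sub (q + c) Y).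
Proof. apply/vecP => v; rewrite !ffunE !inE !subvE; by rewrite (addrC q) addrA. Qed.

Lemma res_sub B (x y : vec) : res B (x - y) = res B x - res B y.
Proof. apply/vecP => v; rewrite !ffunE; case: ifP => _ //; by rewrite subr0. Qed.
Lemma tr_sub c (x y : vec) : tr c (x - y) = tr c x - tr c y.
Proof. by apply/vecP => v; rewrite !ffunE. Qed.
Lemma res0 B : res B 0 = 0.
Proof. apply/vecP => v; rewrite !ffunE; by case: ifP. Qed.
Lemma tr0 c : tr c 0 = 0.
Proof. by apply/vecP => v; rewrite !ffunE. Qed.

Lemma sum3 (x y z : V) : x + y + (y + z) = x + z.
Proof. by rewrite addrA addvK. Qed.

Lemma span_gen ex (a : V) (W : {vspace V}) (b : V) (Y : {vspace V}) E : (Y <= W)%VS -> b - a \in W -> (ex (\dim W - \dim Y) <= E)%N ->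
  span ex a W (gen E (affine_sub b Y)).
Proof. move=> sY bA le; rewrite -(subnKC le); exact: Sg. Qed.

Definition exok (ex ex1 ex2 : nat -> nat) :=
  forall d, [/\ (ex1 d <= ex d)%N, (ex1 d <= ex d.+1)%N, (ex2 d <= ex d.+1)%N & (ex2 d <= (ex d).+1)%N].

Lemma gen_split ex ex1 ex2 (a : V) (W W' : {vspace V}) (c b q : V) (Y : {vspace V}) (j : nat) :
  exok ex ex1 ex2 -> hyper W W' c -> b - a \in W -> q - a \in W -> (Y <= W)%VS ->
  let B := affine_sub b W' in
  let g := gen (ex (\dim W - \dim Y) + j)%N (affine_sub q Y) in
  [/\ span ex1 b W' (res B g), span ex1 b W' (res B (tr c g)) &
      span ex2 b W' (res B g - res B (tr c g))].
Proof.
move=> eok hyp bA qA sY B g.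
have [sW dW cW cW'] := hyp.
rewrite subvE in bA; rewrite subvE in qA.
set E := (ex (\dim W - \dim Y) + j)%N.
have qb : q + b \in W by rewrite -(sum3 q a b) rpredD // addrC.
have qcA : q + c + a \in W by rewrite addrAC rpredD.
rewrite /g tr_gen !res_gen.
case: (boolP (Y <= W')%VS) => YW'.
  have dY := dimvS YW'.
  have hd : (\dim W - \dim Y = (\dim W' - \dim Y).+1)%N by rewrite -dW subSn.
  have [e1 e2 e3 e4] := eok (\dim W' - \dim Y)%N.
  have eq1 : forall r, r + b \in W' -> B :&: affine_sub r Y = affine_sub r Y.
    move=> r rb; apply/setP => v; rewrite !inE !subvE.
    rewrite andbC; case vr: (v + r \in Y) => //=.
    rewrite -(sum3 v r b) rpredD //.
    by move/subvP: YW'; apply.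
  have eq2 : forall r, r + b \notin W' -> B :&: affine_sub r Y = set0.
    move=> r rb; apply/setP => v; rewrite !inE !subvE.
    rewrite andbC; case vr: (v + r \in Y) => //=.
    apply/negP => vb; move/negP: rb; apply.
    rewrite -(sum3 r v b) rpredD // addrC. by move/subvP: YW'; apply.
  case: (boolP (q + b \in W')) => qbW.
    have qcb : q + c + b \notin W'.
      apply/negP => H; move/negP: cW'; apply.
      have -> : c = (q + c + b) + (q + b) by rewrite addrACA addvv addr0 (addrC q c) addvK.
      by rewrite rpredD.
    rewrite eq1 // eq2 // gen_set0 subr0; split; last 1 first; try exact: S0.
    - apply: span_gen => //; first by rewrite subvE. by rewrite hd; apply: leq_trans e3 (leq_addr _ _).
    - apply: span_gen => //; first by rewrite subvE. by rewrite hd; apply: leq_trans e2 (leq_addr _ _).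
  have qcb : q + c + b \in W' by rewrite addrAC; apply: (hyper_add hyp qb qbW).
  rewrite eq2 // eq1 // gen_set0 sub0r; split; try exact: S0.
  - apply: span_gen => //; first by rewrite subvE. by rewrite hd; apply: leq_trans e2 (leq_addr _ _).
  - apply: span_opp; apply: span_gen => //; first by rewrite subvE. by rewrite hd; apply: leq_trans e3 (leq_addr _ _).
have sumW : (Y + W' = W)%VS.
  apply/eqP; rewrite eqEdim subv_add sY sW /=.
  have := dimv_leqif_sup (addvSr Y W'); rewrite subv_add (negbTE YW') /= => /ltn_leqif.
  by rewrite -dW.
have dY0 : ((\dim (Y :&: W')).+1 = \dim Y)%N.
  have := dimv_sum_cap Y W'; rewrite sumW -dW. lia.
have hd : (\dim W' - \dim (Y :&: W') = \dim W - \dim Y)%N.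
  rewrite -dW -dY0 subSS //.
have [e1 e2 e3 e4] := eok (\dim W - \dim Y)%N.
have capE : forall r, r + a \in W -> exists p, p + b \in W' /\ B :&: affine_sub r Y = affine_sub p (Y :&: W')%VS.
  move=> r rA.
  have : r + b \in W by rewrite -(sum3 r a b) rpredD // addrC.
  rewrite -sumW => /memv_addP [y yY [w wW' Ew]].
  have Ew' : w = r + b + y by rewrite Ew (addrC y) addvK.
  have pb : r + y + b \in W' by rewrite addrAC -Ew'.
  exists (r + y); split => //.
  apply/setP => v; rewrite !inE !subvE memv_cap.
  have h1 : (v + (r + y) \in Y) = (v + r \in Y) by rewrite addrA rpredDr.
  have h2 : (v + (r + y) \in W') = (v + b \in W') by rewrite -(sum3 v b (r + y)) rpredDr // addrC.
  by rewrite h1 h2 andbC.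
have [p [pb Ep]] := capE q qA.
have [p' [pb' Ep']] := capE (q + c) qcA.
have sY0 : (Y :&: W' <= W')%VS by rewrite capvSr.
rewrite Ep Ep'; split.
- apply: span_gen => //; first by rewrite subvE. by rewrite hd; apply: leq_trans e1 (leq_addr _ _).
- apply: span_gen => //; first by rewrite subvE. by rewrite hd; apply: leq_trans e1 (leq_addr _ _).
case: (boolP (p + p' \in (Y :&: W')%VS)) => pp.
  have -> : affine_sub p (Y :&: W')%VS = affine_sub p' (Y :&: W')%VS.
    apply/setP => v; rewrite !inE !subvE.
    by rewrite -(sum3 v p p') (rpredDr _ pp).
  rewrite subrr; exact: S0.
set z := p + p'.
have zW' : z \in W' by rewrite /z -(sum3 p b p') rpredD // addrC.
have dF : \dim (Y :&: W' + <[z]>)%VS = \dim Y by rewrite dim_addl.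
have sF : (Y :&: W' + <[z]> <= W')%VS by rewrite subv_add sY0 -memvE zW'.
have -> : gen E (affine_sub p (Y :&: W')%VS) - gen E (affine_sub p' (Y :&: W')%VS) =
   gen E (affine_sub p (Y :&: W' + <[z]>)%VS) - gen E.+1 (affine_sub p' (Y :&: W')%VS).
  apply/vecP => v; rewrite !ffunE !inE !subvE memv_addl.
  have -> : v + p + z = v + p' by rewrite /z addrA addvK.
  case h1: (v + p \in (Y :&: W')%VS); case h2: (v + p' \in (Y :&: W')%VS) => /=; rewrite ?exprS; try ring.
  move/negP: pp; case. by rewrite -(sum3 p v p') rpredD // addrC.
apply: Sb.
- apply: span_gen => //; first by rewrite subvE. rewrite dF.
  have h : (\dim W - \dim Y = (\dim W' - \dim Y).+1)%N.
    have := dimvS sF; rewrite dF => dd. by rewrite -dW subSn.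
  have [_ _ e3' _] := eok (\dim W' - \dim Y)%N.
  by rewrite /E h; apply: leq_trans e3' (leq_addr _ _).
- apply: span_gen => //; first by rewrite subvE. rewrite hd.
  by apply: leq_trans e4 _; rewrite /E ltnS leq_addr.
Qed.

End Split.

Section Split2.
Variable R : realFieldType.
Variable m : nat.
Local Notation V := 'rV['F_2]_m.
Local Notation vec := {ffun V -> R}.
Local Notation gen := (@gen R m).
Local Notation res := (@res R m).
Local Notation tr := (@tr R m).
Local Notation span := (@span R m).
Local Notation nrm := (@nrm R m).
Local Notation dot := (@dotR R m).

Lemma span_split ex ex1 ex2 (a : V) (W W' : {vspace V}) (c b : V) (x : vec) :
  exok ex ex1 ex2 -> hyper W W' c -> b - a \in W -> span ex a W x ->
  let B := affine_sub b W' in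
  [/\ span ex1 b W' (res B x), span ex1 b W' (res B (tr c x)) &
      span ex2 b W' (res B x - res B (tr c x))].
Proof.
move=> eok hyp bA; elim=> [b0 Y j sY b0A|| x1 y1 _ [H1 H2 H3] _ [H4 H5 H6]] B.
- exact: (@gen_split R m ex ex1 ex2 a W W' c b b0 Y j eok hyp bA b0A sY).
- by rewrite tr0 res0 subr0; split; exact: S0.
- rewrite tr_sub !res_sub; split; try exact: Sb.
  have -> : res B x1 - res B y1 - (res B (tr c x1) - res B (tr c y1)) =
     (res B x1 - res B (tr c x1)) - (res B y1 - res B (tr c y1)).
    by apply/vecP => v; rewrite !vsubE; ring.
  exact: Sb.
Qed.

Definition fl (d : nat) := d./2.
Definition ce (d : nat) := d.+1./2.
Definition fl1 (d : nat) := (d./2).+1.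

Lemma half_lem d : (d.+1./2 <= (d./2).+1)%N /\ (d./2 <= d.+1./2)%N.
Proof. rewrite -!divn2; split; lia. Qed.

Lemma exok_fl : exok fl fl ce.
Proof.
move=> d; rewrite /fl /ce; have [h1 h2] := half_lem d; split => //.
Qed.

Lemma exok_ce : exok ce ce fl1.
Proof.
move=> d; rewrite /fl1 /ce; have [h1 h2] := half_lem d; have [h3 h4] := half_lem d.+1.
split => //; by apply: leq_trans h1 _.
Qed.

Lemma span_fl1 a W x : span fl1 a W x -> exists y, span fl a W y /\ x = y + y.
Proof.
elim=> [b Y j sY bA|| x1 y1 _ [z1 [H1 ->]] _ [z2 [H2 ->]]].
- exists (gen (fl (\dim W - \dim Y) + j)%N (affine_sub b Y)); split; first exact: Sg.
  apply/vecP => v; rewrite !ffunE /fl1 addSn exprS; ring.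
- by exists 0; split; [exact: S0 | rewrite addr0].
- exists (z1 - z2); split; first exact: Sb.
  by apply/vecP => v; rewrite !(vsubE, vaddE); ring.
Qed.

Lemma span_dbl a W y : span fl a W y -> span ce a W (y + y).
Proof.
elim=> [b Y j sY bA|| x1 y1 _ H1 _ H2].
- have -> : gen (fl (\dim W - \dim Y) + j) (affine_sub b Y) + gen (fl (\dim W - \dim Y) + j) (affine_sub b Y)
      = gen (fl (\dim W - \dim Y) + j).+1 (affine_sub b Y).
    apply/vecP => v; rewrite !ffunE exprS; ring.
  apply: span_gen => //; rewrite /ce /fl.
  have [h1 _] := half_lem (\dim W - \dim Y)%N; apply: leq_trans h1 _.
  by rewrite ltnS leq_addr.
- rewrite addr0; exact: S0.
- have -> : x1 - y1 + (x1 - y1) = (x1 + x1) - (y1 + y1) by apply/vecP => v; rewrite !(vsubE, vaddE); ring.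
  exact: Sb.
Qed.

Lemma span_ce_fl a W x : span ce a W x -> span fl a W x.
Proof.
elim=> [b Y j sY bA|| x1 y1 _ H1 _ H2]; last 2 first.
- exact: S0.
- exact: Sb.
apply: span_gen => //; rewrite /ce /fl.
have [_ h2] := half_lem (\dim W - \dim Y)%N; apply: leq_trans h2 _; exact: leq_addr.
Qed.

Lemma sum_split (f : V -> R) (a : V) (W W' : {vspace V}) (c b : V) :
  hyper W W' c -> b - a \in W -> (forall v, v - a \notin W -> f v = 0) ->
  \sum_v f v = \sum_v (if v \in affine_sub b W' then f v else 0)
             + \sum_v (if v \in affine_sub b W' then f (v + c) else 0).
Proof.
move=> hyp bA f0.
have [sW dW cW cW'] := hyp.
rewrite (sum_tr (fun v => if v \in affine_sub b W' then f (v + c) else 0) c) /=.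
rewrite -big_split; apply: eq_bigr => v _ /=.
rewrite addvK !inE !subvE.
case: (boolP (v - a \in W)) => vA; last by rewrite f0 //; case: ifP; case: ifP; rewrite ?addr0.
rewrite subvE in vA; rewrite subvE in bA.
have vb : v + b \in W by rewrite -(sum3 v a b) rpredD // addrC.
case: (boolP (v + b \in W')) => vbW.
  have : v + c + b \notin W'.
    apply/negP => H; move/negP: cW'; apply.
    have -> : c = (v + c + b) + (v + b) by rewrite addrACA addvv addr0 (addrC v c) addvK.
    by rewrite rpredD.
  by move/negbTE => ->; rewrite addr0.
have -> : v + c + b \in W' by rewrite addrAC; apply: (hyper_add hyp vb vbW).
by rewrite add0r.
Qed.

Lemma nrm_split (a : V) (W W' : {vspace V}) (c b : V) (x : vec) :
  hyper W W' c -> b - a \in W -> (forall v, v - a \notin W -> x v = 0) ->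
  nrm x = nrm (res (affine_sub b W') x) + nrm (res (affine_sub b W') (tr c x)).
Proof.
move=> hyp bA x0.
rewrite /nrm /dotR (sum_split (f := fun v => x v * x v) hyp bA); last by move=> v /x0 ->; rewrite mulr0.
congr (_ + _); apply: eq_bigr => v _; rewrite !ffunE; by case: ifP; rewrite ?mulr0.
Qed.

Lemma res_id (B : {set V}) (x : vec) : (forall v, v \notin B -> x v = 0) -> res B x = x.
Proof. move=> H; apply/vecP => v; rewrite ffunE; case: ifP => // /negbT /H ->. by []. Qed.

Lemma supp_half (a : V) (W W' : {vspace V}) (c b : V) (x : vec) :
  hyper W W' c -> b - a \in W -> (forall v, v - a \notin W -> x v = 0) ->
  res (affine_sub b W') (tr c x) = 0 -> forall v, v \notin affine_sub b W' -> x v = 0.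
Proof.
move=> hyp bA x0 H v; rewrite inE => vb.
case: (boolP (v - a \in W)) => vA; last exact: x0.
have : (res (affine_sub b W') (tr c x)) (v + c) = 0 by rewrite H v0E.
rewrite !ffunE addvK inE; case: ifP => // /negP nb _; exfalso; apply: nb.
rewrite subvE in vA; rewrite subvE in bA; rewrite subvE in vb; rewrite subvE addrAC.
apply: (hyper_add hyp) => //.
by rewrite -(sum3 v a b) rpredD // addrC.
Qed.

End Split2.

Section Bal.
Variable R : realFieldType.
Variable m : nat.
Local Notation V := 'rV['F_2]_m.
Local Notation vec := {ffun V -> R}.

Lemma sum_if_const (B : {set V}) (g : R) :
  \sum_v (if v \in B then g else 0) = g * \sum_v ((v \in B)%:R : R).
Proof. rewrite mulr_sumr; apply: eq_bigr => v _; by case: ifP; rewrite ?mulr1 ?mulr0. Qed.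

Lemma aff0 (a v : V) (W : {vspace V}) : \dim W = 0%N -> (v \in affine_sub a W) = (v == a).
Proof.
move/eqP; rewrite dimv_eq0 => /eqP ->; rewrite inE memv0 subvE.
apply/eqP/eqP => [h|->]; last exact: addvv.
by rewrite -(addvK v a) h add0r.
Qed.

Lemma card_aff k : forall (a : V) (W : {vspace V}), \dim W = k ->
  \sum_v ((v \in affine_sub a W)%:R : R) = 2 ^+ k.
Proof.
elim: k => [|k IH] a W dW.
  rewrite (bigD1 a) //= aff0 // eqxx big1 ?addr0 // => v va; by rewrite aff0 // (negbTE va).
have [W' [c hyp]] := hyper_exists dW.
have [sW dW' cW cW'] := hyp.
rewrite (@sum_split R m (fun v => ((v \in affine_sub a W)%:R : R)) a W W' c a hyp); last first.
- by move=> v; rewrite inE => /negbTE ->.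
- by rewrite subrr mem0v.
have h1 : forall v, v \in affine_sub a W' -> v \in affine_sub a W by move=> v; rewrite !inE; move/subvP: sW; apply.
have h2 : forall v, v \in affine_sub a W' -> v + c \in affine_sub a W.
  move=> v; rewrite !inE !subvE addrAC => H; apply: rpredD => //. by move/subvP: sW; apply.
have k1 : \dim W' = k by apply/eqP; rewrite -eqSS dW' dW.
have E : forall f : V -> R, (forall v, v \in affine_sub a W' -> f v = 1) ->
   \sum_v (if v \in affine_sub a W' then f v else 0) = 2 ^+ k.
  move=> f Hf; rewrite -(IH a W' k1); apply: eq_bigr => v _; by case: ifP => // /Hf ->.
rewrite !E; first by rewrite exprS mulr2n mulrDl mul1r.
- by move=> v /h2 ->.
- by move=> v /h1 ->.
Qed.

Definition balanced (g : V -> R) (a : V) (W : {vspace V}) :=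
  forall b W' c, b - a \in W -> hyper W W' c ->
  \sum_v (if v \in affine_sub b W' then g v else 0) =
  \sum_v (if v \in affine_sub b W' then g (v + c) else 0).

Lemma sum_line (h : V -> R) (b z : V) (Y : {vspace V}) : z \notin Y ->
  \sum_v (if v \in affine_sub b (Y + <[z]>)%VS then h v else 0) =
  \sum_v (if v \in affine_sub b Y then h v else 0) + \sum_v (if v \in affine_sub b Y then h (v + z) else 0).
Proof.
move=> zY.
rewrite (sum_tr (fun v => if v \in affine_sub b Y then h (v + z) else 0) z) /=.
rewrite -big_split; apply: eq_bigr => v _ /=.
rewrite addvK !inE !subvE memv_addl (addrAC v z b).
case: (boolP (v + b \in Y)) => H1; case: (boolP (v + b + z \in Y)) => H2 //=; rewrite ?addr0 ?add0r //.
move/negP: zY; case.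
have -> : z = (v + b) + (v + b + z) by rewrite addrA addvv add0r.
by rewrite rpredD.
Qed.

Lemma sub_bal g (a : V) (W W' : {vspace V}) c b :
  balanced g a W -> hyper W W' c -> b - a \in W -> balanced g b W'.
Proof.
move=> bal hyp bA b0 W0 d b0b hyp'.
have [sW dW cW cW'] := hyp.
have [sW0 dW0 dW' dW0'] := hyp'.
have cW0 : c \notin W0 by apply/negP => /(subv_in sW0) H; rewrite H in cW'.
have cdW0 : c + d \notin W0.
  apply/negP => /(subv_in sW0) H; move/negP: cW'; apply.
  by rewrite -(addvK c d) rpredD.
have b0A : b0 - a \in W.
  rewrite subvE in b0b; rewrite subvE in bA; rewrite subvE.
  rewrite -(sum3 b0 b a) rpredD //; by move/subvP: sW; apply.
have dWW : d \in W by move/subvP: sW; apply.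
have h1 : hyper W (W0 + <[c]>)%VS d.
  split.
  - by rewrite subv_add -memvE cW andbT; apply: subv_trans sW.
  - by rewrite dim_addl // dW0.
  - done.
  - rewrite memv_addl negb_or dW0' /=; apply/negP => H; move/negP: cW'; apply.
    have -> : c = (d + c) + d by rewrite (addrC d c) addvK.
    by rewrite rpredD // (subv_in sW0 H).
have h2 : hyper W (W0 + <[c + d]>)%VS d.
  split.
  - by rewrite subv_add -memvE rpredD // andbT; apply: subv_trans sW.
  - by rewrite dim_addl // dW0.
  - done.
  - rewrite memv_addl negb_or dW0' /=; apply/negP => H; move/negP: cW0; apply.
    have -> : c = (d + (c + d)) by rewrite addrC addvK.
    done.
have E1 := bal b0 _ d b0A h1.
have E2 := bal b0 _ d b0A h2.
rewrite !sum_line // in E1 E2.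
set S := fun h : V -> R => \sum_v (if v \in affine_sub b0 W0 then h v else 0).
have e1 : \sum_v (if v \in affine_sub b0 W0 then g (v + d + c) else 0) =
          \sum_v (if v \in affine_sub b0 W0 then g (v + (c + d)) else 0).
  by apply: eq_bigr => v _; rewrite (addrC c d) addrA.
have e2 : \sum_v (if v \in affine_sub b0 W0 then g (v + c + d) else 0) =
          \sum_v (if v \in affine_sub b0 W0 then g (v + (c + d)) else 0).
  by apply: eq_bigr => v _; rewrite addrA.
have e3 : \sum_v (if v \in affine_sub b0 W0 then g (v + (c + d) + d) else 0) =
          \sum_v (if v \in affine_sub b0 W0 then g (v + c) else 0).
  by apply: eq_bigr => v _; rewrite addrA addvK.
rewrite e2 in E1; rewrite e3 in E2.
lra.
Qed.

Lemma bal_const k : forall g (a : V) (W : {vspace V}), \dim W = k -> balanced g a W ->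
  forall v, v - a \in W -> g v = g a.
Proof.
elim: k => [|k IH] g a W dW bal v vA.
  have : v \in affine_sub a W by rewrite inE.
  by rewrite aff0 // => /eqP ->.
have [W' [c hyp]] := hyper_exists dW.
have [sW dW' cW cW'] := hyp.
have k1 : \dim W' = k by apply/eqP; rewrite -eqSS dW' dW.
have a0 : a - a \in W by rewrite subrr mem0v.
have a0' : a - a \in W' by rewrite subrr mem0v.
have IH1 := IH g a W' k1 (sub_bal bal hyp a0).
have acA : (a + c) - a \in W by rewrite subvE addrAC addvv add0r.
have IH2 := IH g (a + c) W' k1 (sub_bal bal hyp acA).
have Ea : g a = g (a + c).
  have := bal a W' c a0 hyp.
  have -> : \sum_v (if v \in affine_sub a W' then g v else 0) = \sum_v (if v \in affine_sub a W' then g a else 0).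
    by apply: eq_bigr => w _; case: ifP => //; rewrite inE => /IH1 ->.
  have -> : \sum_v (if v \in affine_sub a W' then g (v + c) else 0) = \sum_v (if v \in affine_sub a W' then g (a + c) else 0).
    apply: eq_bigr => w _; case: ifP => //; rewrite inE => H; rewrite IH2 //.
    by rewrite !subvE addrACA addvv addr0 -subvE.
  rewrite !sum_if_const (@card_aff k a W' k1) => H.
  have p2 : (2 : R) ^+ k != 0 by rewrite expf_neq0 // pnatr_eq0.
  by apply: (mulIf p2).
case: (boolP (v - a \in W')) => vW'; first exact: IH1.
rewrite IH2 // subvE.
have : v + a + c \in W' by apply: (hyper_add hyp) => //; rewrite -subvE.
by rewrite addrA.
Qed.

End Bal.

Section Main.
Variable R : realFieldType.
Variable m : nat.
Local Notation V := 'rV['F_2]_m.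
Local Notation vec := {ffun V -> R}.
Local Notation span := (@span R m).
Local Notation res := (@res R m).
Local Notation tr := (@tr R m).
Local Notation nrm := (@nrm R m).
Local Notation dot := (@dotR R m).

Lemma sq_nat (r : R) : isZ r -> exists k : nat, r * r = k%:R.
Proof.
case=> z ->; case: z => n.
  by exists (n * n)%N; rewrite -pmulrn natrM.
exists (n.+1 * n.+1)%N; rewrite NegzE intrN mulrNN -pmulrn natrM //.
Qed.

Lemma nrm0 : nrm 0 = 0.
Proof. by rewrite /nrm /dotR big1 // => v _; rewrite v0E mul0r. Qed.

Lemma nrm_dbl (y : vec) : nrm (y + y) = 4 * nrm y.
Proof. rewrite nrmD /nrm; ring. Qed.

Lemma dim0_nrm ex (a : V) (W : {vspace V}) x : \dim W = 0%N -> span ex a W x ->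
  exists k : nat, nrm x = k%:R /\ (x != 0 -> (0 < k)%N).
Proof.
move=> dW Hx.
have sup : forall v, v != a -> x v = 0.
  move=> v va; apply: (span_supp Hx); by rewrite -affE (aff0 _ _ dW) (negbTE va).
have [k Hk] := sq_nat (span_int Hx a).
exists k; split.
  rewrite /nrm /dotR (bigD1 a) //= big1 ?addr0 // => v va; by rewrite sup // mul0r.
move=> nz; rewrite lt0n; apply/negP => /eqP k0.
move: Hk; rewrite k0 => /eqP; rewrite mulf_eq0 orbb => /eqP xa.
move/negP: nz; apply; apply/eqP/vecP => v; rewrite v0E.
by case: (eqVneq v a) => [->|/sup].
Qed.

Lemma dot_res (B : {set V}) (x y : vec) : dot (res B x) y = dot (res B x) (res B y).
Proof. apply: eq_bigr => v _; rewrite !ffunE; by case: ifP; rewrite ?mul0r. Qed.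

Lemma hyp_base (a : V) (W : {vspace V}) : a - a \in W.
Proof. by rewrite subrr mem0v. Qed.

Definition MinP k :=
  (forall a W x, \dim W = k -> span fl a W x -> x != 0 -> 2 ^+ k <= 2 * nrm x) /\
  (forall a W x, \dim W = k -> span ce a W x -> x != 0 -> 2 ^+ k <= nrm x).

Lemma minLM k : MinP k.
Proof.
elim: k => [|k [IHL IHM]].
  split=> a W x dW Hx nz; have [n [-> n0]] := dim0_nrm dW Hx; have := n0 nz;
   rewrite -(ler1n R) expr0 => H; lra.
split=> a W x dW Hx nz.
- have [W' [c hyp]] := hyper_exists dW.
  have [sW dW' cW cW'] := hyp.
  have k1 : \dim W' = k by apply/eqP; rewrite -eqSS dW' dW.
  have [Hu Hw Hs] := span_split exok_fl hyp (hyp_base a W) Hx.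
  have En := nrm_split hyp (hyp_base a W) (span_supp Hx).
  set u := res _ x in Hu Hs En; set w := res _ (tr c x) in Hw Hs En.
  rewrite exprS En.
  case: (eqVneq u 0) => [u0|un0]; case: (eqVneq w 0) => [w0|wn0].
  + by move/negP: nz; case; apply/eqP; apply: nrm_eq0; rewrite En u0 w0 nrm0 addr0.
  + have Hw' : span ce a W' w by have := span_opp Hs; rewrite u0 sub0r opprK.
    have := IHM _ _ _ k1 Hw' wn0; rewrite u0 nrm0; lra.
  + have Hu' : span ce a W' u by move: Hs; rewrite w0 subr0.
    have := IHM _ _ _ k1 Hu' un0; rewrite w0 nrm0; lra.
  + have := IHL _ _ _ k1 Hu un0; have := IHL _ _ _ k1 Hw wn0; lra.
- have [W' [c hyp]] := hyper_exists dW.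
  have [sW dW' cW cW'] := hyp.
  have k1 : \dim W' = k by apply/eqP; rewrite -eqSS dW' dW.
  have [Hu Hw Hs] := span_split exok_ce hyp (hyp_base a W) Hx.
  have En := nrm_split hyp (hyp_base a W) (span_supp Hx).
  set u := res _ x in Hu Hs En; set w := res _ (tr c x) in Hw Hs En.
  have [y [Hy Ey]] := span_fl1 Hs.
  rewrite exprS En.
  case: (eqVneq u 0) => [u0|un0]; case: (eqVneq w 0) => [w0|wn0].
  + by move/negP: nz; case; apply/eqP; apply: nrm_eq0; rewrite En u0 w0 nrm0 addr0.
  + have ew : w = - (y + y) by rewrite -Ey u0 sub0r opprK.
    have yn0 : y != 0 by apply/eqP => y0; move/eqP: wn0; apply; rewrite ew y0 addr0 oppr0.
    have := IHL _ _ _ k1 Hy yn0; rewrite u0 nrm0 ew nrmN nrm_dbl; lra.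
  + have eu : u = y + y by rewrite -Ey w0 subr0.
    have yn0 : y != 0 by apply/eqP => y0; move/eqP: un0; apply; rewrite eu y0 addr0.
    have := IHL _ _ _ k1 Hy yn0; rewrite w0 nrm0 eu nrm_dbl; lra.
  + have := IHM _ _ _ k1 Hu un0; have := IHM _ _ _ k1 Hw wn0; lra.
Qed.



Lemma propV k (a : V) (W : {vspace V}) u : \dim W = k.+1 -> span fl a W u -> 2 * nrm u = 2 ^+ k.+1 ->
  exists b W' c, [/\ b - a \in W, hyper W W' c & res (affine_sub b W') (tr c u) = 0].
Proof.
move=> dW Hu Nu; apply: NNPP => Hn.
pose g := fun v => u v * u v.
have sup := span_supp Hu.
have bal : balanced g a W.
  move=> b W' c bA hyp.
  have [sW dW' cW cW'] := hyp.
  have k1 : \dim W' = k by apply/eqP; rewrite -eqSS dW' dW.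
  have [H1 H2 _] := span_split exok_fl hyp bA Hu.
  have En := nrm_split hyp bA sup.
  have r1 : res (affine_sub b W') (tr c u) != 0.
    by apply/eqP => H; apply: Hn; exists b, W', c.
  have r2 : res (affine_sub b W') u != 0.
    apply/eqP => H; apply: Hn; exists (b + c), W', c; split => //.
      by rewrite subvE addrAC; rewrite subvE in bA; apply: rpredD.
    apply/vecP => v; rewrite v0E !ffunE inE; case: ifP => // Hv.
    have := congr1 (fun f : vec => f (v + c)) H; rewrite /= v0E ffunE inE.
    rewrite !subvE in Hv *; rewrite -addrA (addrC c) Hv.
    by [].
  have [m1 _] := minLM k.
  have := m1 _ _ _ k1 H1 r2; have := m1 _ _ _ k1 H2 r1.
  have e1 : \sum_v (if v \in affine_sub b W' then g v else 0) = nrm (res (affine_sub b W') u).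
    apply: eq_bigr => v _; rewrite !ffunE; by case: ifP; rewrite ?mulr0.
  have e2 : \sum_v (if v \in affine_sub b W' then g (v + c) else 0) = nrm (res (affine_sub b W') (tr c u)).
    apply: eq_bigr => v _; rewrite !ffunE; by case: ifP; rewrite ?mulr0.
  rewrite e1 e2; move: Nu; rewrite En exprS; lra.
have cst := bal_const dW bal.
have : nrm u = g a * \sum_v ((v \in affine_sub a W)%:R : R).
  rewrite -sum_if_const; apply: eq_bigr => v _; rewrite inE; case: ifP => vA.
    by rewrite -(cst v vA).
  by rewrite sup ?vA // mulr0.
rewrite (@card_aff R m k.+1 a W dW) => Eu.
have [n Hn'] := sq_nat (span_int Hu a).
move: Nu; rewrite Eu /g Hn' exprS => H.
have p2 : (0 : R) < 2 ^+ k by rewrite exprn_gt0.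
have : (2 * n%:R : R) = 1.
  apply: (mulIf (lt0r_neq0 p2)). rewrite mul1r; lra.
rewrite -natrM => /eqP; rewrite pnatr_eq1; lia.
Qed.

Definition LMp k := forall (a : V) W u s, \dim W = k -> span fl a W u -> span ce a W s ->
  2 * nrm u = 2 ^+ k -> nrm s = 2 ^+ k -> ~ (2 ^+ k < 4 * dot u s /\ 8 * dot u s <= 3 * 2 ^+ k).

Lemma LM k : LMp k.
Proof.
elim: k => [|k IH] a W u s dW Hu Hs Nu Ns.
  have [n [En _]] := dim0_nrm dW Hu.
  move: Nu; rewrite En expr0 -natrM => /eqP; rewrite pnatr_eq1; lia.
have [b [W' [c [bA hyp Hz]]]] := propV dW Hu Nu.
have [sW dW' cW cW'] := hyp.
have k1 : \dim W' = k by apply/eqP; rewrite -eqSS dW' dW.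
have [m1 m2] := minLM k.
have supu := supp_half hyp bA (span_supp Hu) Hz.
set B := affine_sub b W' in supu Hz.
have [_ _ Hp] := span_split exok_fl hyp bA Hu.
rewrite -/B Hz subr0 in Hp.
have Eu : res B u = u by apply: res_id.
set p := res B u in Hp Eu.
have Np : nrm p = 2 ^+ k by move: Nu; rewrite Eu exprS; lra.
have [Hq Hq' Hqq] := span_split exok_ce hyp bA Hs.
have Es := nrm_split hyp bA (span_supp Hs).
rewrite -/B in Hq Hq' Hqq Es.
set q := res B s in Hq Hqq Es; set q' := res B (tr c s) in Hq' Hqq Es.
have Ed : dot u s = dot p q by rewrite -Eu dot_res.
rewrite Ed; clear Ed.
case: (eqVneq q 0) => [q0|qn0].
  rewrite q0 /dotR big1 => [|v _]; last by rewrite v0E mulr0.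
  have : (0 : R) < 2 ^+ k.+1 by rewrite exprn_gt0.
  lra.
have [y [Hy Ey]] := span_fl1 Hqq.
case: (eqVneq q' 0) => [q'0|q'n0].
  have eq : q = y + y by rewrite -Ey q'0 subr0.
  have Ny : 2 * nrm y = 2 ^+ k by move: Ns; rewrite Es q'0 nrm0 addr0 eq nrm_dbl exprS; lra.
  have := IH _ _ _ _ k1 Hy Hp Ny Np.
  rewrite eq dotDr (dotC p y) exprS; lra.
have := m2 _ _ _ k1 Hq qn0; have := m2 _ _ _ k1 Hq' q'n0.
move: Ns; rewrite Es exprS => Ns Nq' Nq.
have Nq2 : nrm q = 2 ^+ k by lra.
case: (eqVneq p q) => [pq|pqn].
  have : dot p q = 2 ^+ k by rewrite pq; exact: Nq2.
  have : (0 : R) < 2 ^+ k by rewrite exprn_gt0.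
  lra.
have Hpq : span ce b W' (p - q) by apply: Sb.
have pqn0 : p - q != 0 by rewrite subr_eq0.
have := m2 _ _ _ k1 Hpq pqn0.
rewrite nrmB Np Nq2; lra.
Qed.

Definition Gp k := forall (a : V) W x, \dim W = k -> span fl a W x ->
  2 ^+ k < 2 * nrm x -> 3 * 2 ^+ k <= 4 * nrm x.
Definition GMp k := forall (a : V) W x, \dim W = k -> span ce a W x ->
  2 ^+ k < nrm x -> 3 * 2 ^+ k <= 2 * nrm x.

Lemma G_core2 k (b : V) W' u w : Gp k -> GMp k -> \dim W' = k ->
  span fl b W' u -> span fl b W' w -> span ce b W' (u - w) ->
  2 * nrm u = 2 ^+ k -> w != 0 -> 2 ^+ k < nrm u + nrm w -> 2 * (nrm u + nrm w) < 3 * 2 ^+ k -> False.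
Proof.
move=> G GM k1 Hu Hw Hs Nu wn0 h1 h2.
have [m1 m2] := minLM k.
have Gw := G _ _ _ k1 Hw (ltac:(lra)).
have Ht : span ce b W' (u + w).
  have -> : u + w = (u + u) - (u - w) by apply/vecP => v; rewrite !(vsubE, vaddE); ring.
  apply: Sb => //; exact: span_dbl.
have p0 : (0 : R) < 2 ^+ k by rewrite exprn_gt0.
have Est : nrm (u - w) + nrm (u + w) = 2 * (nrm u + nrm w) by rewrite nrmB nrmD; ring.
case: (eqVneq (u - w) 0) => [s0|sn0].
  move/eqP: s0; rewrite subr_eq0 => /eqP uw; move: h1; rewrite -uw; lra.
case: (eqVneq (u + w) 0) => [t0|tn0].
  have : w = - u by apply/eqP; rewrite -addr_eq0 addrC t0.
  move=> ew; move: h1; rewrite ew nrmN; lra.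
have Ns := m2 _ _ _ k1 Hs sn0; have Nt := m2 _ _ _ k1 Ht tn0.
have LMk := @LM k.
case: (eqVneq (nrm (u - w)) (2 ^+ k)) => [es|ns].
  apply: (LMk _ _ _ _ k1 Hu Hs Nu es).
  have : nrm w = nrm (u - (u - w)) by rewrite opprB addrC subrK.
  rewrite nrmB es => ew; lra.
case: (eqVneq (nrm (u + w)) (2 ^+ k)) => [et|nt].
  apply: (LMk _ _ _ _ k1 Hu Ht Nu et).
  have : nrm w = nrm ((u + w) - u) by rewrite (addrC u w) addrK.
  rewrite nrmB et (dotC (u + w) u) => ew; lra.
have g1 := GM _ _ _ k1 Hs (ltac:(rewrite lt_neqAle eq_sym ns Ns //)).
have g2 := GM _ _ _ k1 Ht (ltac:(rewrite lt_neqAle eq_sym nt Nt //)).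
move: Est h2 g1 g2; clear; lra.
Qed.

Lemma GM_core2 k (b : V) W' u w y : Gp k -> GMp k -> \dim W' = k ->
  span ce b W' u -> span ce b W' w -> span fl b W' y -> u - w = y + y ->
  nrm u = 2 ^+ k -> w != 0 -> 2 * 2 ^+ k < nrm u + nrm w -> nrm u + nrm w < 3 * 2 ^+ k -> False.
Proof.
move=> G GM k1 Hu Hw Hy Ey Nu wn0 h1 h2.
have [m1 m2] := minLM k.
have p0 : (0 : R) < 2 ^+ k by rewrite exprn_gt0.
have Gw := GM _ _ _ k1 Hw (ltac:(lra)).
have Hz : span fl b W' (u - y) by apply: Sb => //; exact: span_ce_fl.
have Ez : u + w = (u - y) + (u - y).
  have -> : w = u - (y + y) by rewrite -Ey opprB addrC subrK.
  by apply/vecP => v; rewrite !(vsubE, vaddE); ring.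
have Est : 4 * nrm y + 4 * nrm (u - y) = 2 * (nrm u + nrm w).
  by rewrite -!nrm_dbl -Ey -Ez nrmB nrmD; ring.
case: (eqVneq y 0) => [y0|yn0].
  have : u = w by apply/eqP; rewrite -subr_eq0 Ey y0 addr0.
  move=> uw; move: h1; rewrite -uw; lra.
case: (eqVneq (u - y) 0) => [z0|zn0].
  have : w = - u by apply/eqP; rewrite -addr_eq0 addrC Ez z0 addr0.
  move=> ew; move: h1; rewrite ew nrmN; lra.
have Ny := m1 _ _ _ k1 Hy yn0; have Nz := m1 _ _ _ k1 Hz zn0.
have LMk := @LM k.
case: (eqVneq (2 * nrm y) (2 ^+ k)) => [ey|ny].
  apply: (LMk _ _ _ _ k1 Hy Hu ey Nu).
  have : nrm w = nrm (u - (y + y)) by rewrite -Ey opprB addrC subrK.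
  rewrite nrmB nrm_dbl dotDr (dotC u y) => ew; lra.
case: (eqVneq (2 * nrm (u - y)) (2 ^+ k)) => [ez|nz].
  apply: (LMk _ _ _ _ k1 Hz Hu ez Nu).
  have : nrm w = nrm ((u - y + (u - y)) - u) by rewrite -Ez (addrC u w) addrK.
  rewrite nrmB nrm_dbl dotDl => ew; lra.
have g1 := G _ _ _ k1 Hy (ltac:(rewrite lt_neqAle eq_sym ny Ny //)).
have g2 := G _ _ _ k1 Hz (ltac:(rewrite lt_neqAle eq_sym nz Nz //)).
move: Est h2 g1 g2; clear; lra.
Qed.

Lemma G_all k : Gp k /\ GMp k.
Proof.
elim: k => [|k [G GM]].
  split=> a W x dW Hx h; have [n [En _]] := dim0_nrm dW Hx; rewrite En in h *; rewrite expr0 in h *.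
    case: n En h => [|n] En h; first lra.
    have : (1 : R) <= n.+1%:R by rewrite ler1n.
    lra.
  have : (1 < n)%N by rewrite -(ltr_nat R) //.
  rewrite -(ler_nat R) => h'. lra.
have [m1 m2] := minLM k.
have p0 : (0 : R) < 2 ^+ k by rewrite exprn_gt0.
split=> a W x dW Hx h.
- have [W' [c hyp]] := hyper_exists dW.
  have [sW dW' cW cW'] := hyp.
  have k1 : \dim W' = k by apply/eqP; rewrite -eqSS dW' dW.
  have [Hu Hw Hs] := span_split exok_fl hyp (hyp_base a W) Hx.
  have En := nrm_split hyp (hyp_base a W) (span_supp Hx).
  set u := res _ x in Hu Hs En; set w := res _ (tr c x) in Hw Hs En.
  rewrite leNgt; apply/negP => h2.
  rewrite En exprS in h h2.
  case: (eqVneq u 0) => [u0|un0].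
    have Hw' : span ce a W' w by have := span_opp Hs; rewrite u0 sub0r opprK.
    rewrite u0 nrm0 add0r in h h2.
    have := GM _ _ _ k1 Hw' (ltac:(lra)); lra.
  case: (eqVneq w 0) => [w0|wn0].
    have Hu' : span ce a W' u by move: Hs; rewrite w0 subr0.
    rewrite w0 nrm0 addr0 in h h2.
    have := GM _ _ _ k1 Hu' (ltac:(lra)); lra.
  have Nu := m1 _ _ _ k1 Hu un0; have Nw := m1 _ _ _ k1 Hw wn0.
  case: (eqVneq (2 * nrm u) (2 ^+ k)) => [eu|nu].
    apply: (G_core2 G GM k1 Hu Hw Hs eu wn0); lra.
  case: (eqVneq (2 * nrm w) (2 ^+ k)) => [ew|nw].
    have Hs' : span ce a W' (w - u) by rewrite -opprB; apply: span_opp.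
    apply: (G_core2 G GM k1 Hw Hu Hs' ew un0); lra.
  have g1 := G _ _ _ k1 Hu (ltac:(rewrite lt_neqAle eq_sym nu Nu //)).
  have g2 := G _ _ _ k1 Hw (ltac:(rewrite lt_neqAle eq_sym nw Nw //)).
  lra.
- have [W' [c hyp]] := hyper_exists dW.
  have [sW dW' cW cW'] := hyp.
  have k1 : \dim W' = k by apply/eqP; rewrite -eqSS dW' dW.
  have [Hu Hw Hs] := span_split exok_ce hyp (hyp_base a W) Hx.
  have En := nrm_split hyp (hyp_base a W) (span_supp Hx).
  set u := res _ x in Hu Hs En; set w := res _ (tr c x) in Hw Hs En.
  have [y [Hy Ey]] := span_fl1 Hs.
  rewrite leNgt; apply/negP => h2.
  rewrite En exprS in h h2.
  case: (eqVneq u 0) => [u0|un0].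
    have ew : w = - (y + y) by rewrite -Ey u0 sub0r opprK.
    rewrite u0 nrm0 add0r ew nrmN nrm_dbl in h h2.
    have := G _ _ _ k1 Hy (ltac:(lra)); lra.
  case: (eqVneq w 0) => [w0|wn0].
    have eu : u = y + y by rewrite -Ey w0 subr0.
    rewrite w0 nrm0 addr0 eu nrm_dbl in h h2.
    have := G _ _ _ k1 Hy (ltac:(lra)); lra.
  have Nu := m2 _ _ _ k1 Hu un0; have Nw := m2 _ _ _ k1 Hw wn0.
  case: (eqVneq (nrm u) (2 ^+ k)) => [eu|nu].
    apply: (GM_core2 G GM k1 Hu Hw Hy Ey eu wn0); lra.
  case: (eqVneq (nrm w) (2 ^+ k)) => [ew|nw].
    have Ey' : w - u = (- y) + (- y) by rewrite -opprB Ey opprD.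
    apply: (GM_core2 G GM k1 Hw Hu (span_opp Hy) Ey' ew un0); lra.
  have g1 := GM _ _ _ k1 Hu (ltac:(rewrite lt_neqAle eq_sym nu Nu //)).
  have g2 := GM _ _ _ k1 Hw (ltac:(rewrite lt_neqAle eq_sym nw Nw //)).
  lra.
Qed.

End Main.

Lemma BW_span (R : realFieldType) (m : nat) (x : vecR R m) : BW x -> span fl 0 fullv x.
Proof.
elim=> [y [r [a [W [rm dW ->]]]]||y z _ Hy _ Hz]; last 2 first.
- exact: S0.
- exact: Sb.
have dF : \dim (fullv : {vspace 'rV['F_2]_m}) = m by rewrite dimvf /dim /= mul1n.
have -> : [ffun v => 2 ^+ (m - r)./2 * xU R (affine_sub a W) v] =
          gen R (fl (\dim (fullv : {vspace 'rV['F_2]_m}) - \dim W) + 0)%N (affine_sub a W).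
  by apply/ffunP => v; rewrite !ffunE dF dW addn0.
exact: (@Sg R m fl 0 fullv a W 0%N (subvf W) (memvf _)).
Qed.

Theorem theorem3p3 (R : realFieldType) (m : nat) (hm : (1 <= m)%N)
  (x : vecR R m) (hx : BW x)
  (hgt : 2 ^+ m.-1 < dotR x x) :
  2 ^+ m.-1 + (2 : R) ^ (m%:Z - 2) <= dotR x x.
Proof.
case: m hm x hx hgt => [//|k] _ x hx hgt /=.
have dF : \dim (fullv : {vspace 'rV['F_2]_k.+1}) = k.+1 by rewrite dimvf /dim /= mul1n.
have [G _] := @G_all R k.+1 k.+1.
have H := G _ _ _ dF (BW_span hx).
rewrite /= in hgt.
have e : (2 : R) ^ (k.+1%:Z - 2) = 2 ^+ k / 2.
  have -> : (k.+1%:Z - 2 = k%:Z + (-1))%R by rewrite -addn1 PoszD; ring.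
  rewrite expfzDr //; apply/negP => /eqP; lra.
rewrite e.
have := H (ltac:(rewrite exprS /nrm; lra)).
rewrite exprS /nrm => H'; lra.
Qed.
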